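(* Consider, for known parameters $\boldsymbol\theta$ as in the context, the optimization problem in the prices $\mathbf p=(p_{ij})_{i\neq j}$: $$\max\ \sum_{i\in\mathcal N}\sum_{j\neq i}\xi_{ij}(\alpha_{ij}-\beta_{ij}p_{ij}+\epsilon_{ij}^-)p_{ij}-\sum_{i\in\mathcal N}\sum_{j\neq i}\xi_{ij}(\alpha_{ij}-\beta_{ij}p_{ij})c$$ subject to $\sum_{j\neq i}(\alpha_{ij}-\beta_{ij}p_{ij})=\sum_{j\neq i}(\alpha_{ji}-\beta_{ji}p_{ji})$ for all $i\in\mathcal N$, and $p_{ij}\le p_{\max}$ for all $i\neq j$. Let $\mathbf p^*(\boldsymbol\theta)$ be its optimal solution and $\mu_{ij}^*$ the optimal dual variable associated with the constraint $p_{ij}\le p_{\max}$. If $\mu_{ij}^*=0$ for all $(i,j)$, then for every link $(i,j)$, $$p_{ij}^*(\boldsymbol\theta)=\frac{c\beta_{ij}+\alpha_{ij}+\epsilon_{ij}^-}{2\beta_{ij}}+\frac{1}{4\xi_{ij}}\sum_{k\in\mathcal N}\big(R_{jk}(\boldsymbol\beta)-R_{ik}(\boldsymbol\beta)\big)v_k(\boldsymbol\theta),$$ where $v_k(\boldsymbol\theta)=\sum_{j\neq k}(\alpha_{kj}-c\beta_{kj}-\epsilon_{kj}^-)-\sum_{j\neq k}(\alpha_{jk}-c\beta_{jk}-\epsilon_{jk}^-)$.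
   Context: Locations $\mathcal N=\{1,\dots,N\}$. For each ordered pair $(i,j)$, $i\neq j$: parameters $\alpha_{ij}>0$, $\beta_{ij}>0$ (collected in $\boldsymbol\theta$, with $\boldsymbol\beta=(\beta_{ij})_{i\neq j}$), travel time $\xi_{ij}>0$, and a random demand shock $\epsilon_{ij}$ supported in $[\underline\epsilon,\overline\epsilon]$ with c.d.f. $F_{ij}$ and mean zero; $\epsilon_{ij}^-:=\int_{\underline\epsilon}^{0}x\,dF_{ij}(x)$ (a nonpositive number). $c>0$ is a per-slot vehicle cost and $p_{\max}>c$ a maximum price. Effective resistances: form the resistor network on nodes $\mathcal N$ in which, for each $i<j$, nodes $i$ and $j$ are joined by a resistor of resistance $r_{ij}=1/(\beta_{ij}/\xi_{ij}+\beta_{ji}/\xi_{ji})$. $R_{ij}(\boldsymbol\beta)$ denotes the effective resistance between nodes $i$ and $j$ in this network, i.e. the voltage between $i$ and $j$ when a unit current is injected at $i$ and extracted at $j$ (with $R_{ii}(\boldsymbol\beta)=0$). *)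

(* Defs.v *)
From HB Require Import structures.
From mathcomp Require Import all_boot all_order all_algebra.
From mathcomp Require Import all_classical all_reals all_analysis.

Set Implicit Arguments.
Unset Strict Implicit.
Unset Printing Implicit Defensive.

Import Order.TTheory GRing.Theory Num.Theory.
Local Open Scope ring_scope.

Section Pricing.
Variables (R : realType) (N : nat).

(* eps^-_{ij} = \int_{lo}^{0} x dF_{ij}(x), lo = lower end of the support *)
Definition eps_minus (lo : R) (F : probability R R) : R :=
  fine (\int[F]_(x in `[lo, 0%R]%classic) x%:E)%E.

Variables (alpha beta xi em : 'I_N -> 'I_N -> R) (c pmax : R).

Definition demand (p : 'I_N -> 'I_N -> R) (i j : 'I_N) : R :=
  alpha i j - beta i j * p i j.

Definition objective (p : 'I_N -> 'I_N -> R) : R :=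
  \sum_(i < N) \sum_(j < N | j != i) xi i j * (alpha i j - beta i j * p i j + em i j) * p i j
  - \sum_(i < N) \sum_(j < N | j != i) xi i j * (alpha i j - beta i j * p i j) * c.

Definition balance (p : 'I_N -> 'I_N -> R) (i : 'I_N) : R :=
  \sum_(j < N | j != i) (alpha i j - beta i j * p i j)
  - \sum_(j < N | j != i) (alpha j i - beta j i * p j i).

Definition feasible (p : 'I_N -> 'I_N -> R) : Prop :=
  (forall i, balance p i = 0) /\ (forall i j, i != j -> p i j <= pmax).

Definition optimal (p : 'I_N -> 'I_N -> R) : Prop :=
  feasible p /\ forall q, feasible q -> objective q <= objective p.

Definition lagrangian (p : 'I_N -> 'I_N -> R) (lam : 'I_N -> R)
    (mu : 'I_N -> 'I_N -> R) : R :=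
  objective p + \sum_(i < N) lam i * balance p i
  - \sum_(i < N) \sum_(j < N | j != i) mu i j * (p i j - pmax).

Definition optimal_dual (p : 'I_N -> 'I_N -> R) (lam : 'I_N -> R)
    (mu : 'I_N -> 'I_N -> R) : Prop :=
  (forall i j, i != j -> 0 <= mu i j /\ mu i j * (p i j - pmax) = 0) /\
  (forall q, lagrangian q lam mu <= lagrangian p lam mu).

Definition vnode (k : 'I_N) : R :=
  \sum_(j < N | j != k) (alpha k j - c * beta k j - em k j)
  - \sum_(j < N | j != k) (alpha j k - c * beta j k - em j k).

End Pricing.

Section Resistance.
Variables (R : realType) (N : nat) (beta xi : 'I_N -> 'I_N -> R).

Definition resist (k l : 'I_N) : R :=
  1 / (beta k l / xi k l + beta l k / xi l k).

Definition unit_current_potential (i j : 'I_N) (phi : 'I_N -> R) : Prop :=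
  forall k, \sum_(l < N | l != k) (phi k - phi l) / resist k l
            = (k == i)%:R - (k == j)%:R.

Definition eff_res (i j : 'I_N) : R :=
  match pselect (exists phi, unit_current_potential i j phi) with
  | left h => let phi := projT1 (cid h) in phi i - phi j
  | right _ => 0
  end.

End Resistance.

(* Main.v *)
Require Import Defs.
From HB Require Import structures.
From mathcomp Require Import all_boot all_order all_algebra.
From mathcomp Require Import all_classical all_reals all_analysis.
From mathcomp Require Import ring lra zify.
Import Order.TTheory GRing.Theory Num.Theory.
Local Open Scope ring_scope.

Section Lap.
Variables (R : realFieldType) (N : nat) (w : 'I_N -> 'I_N -> R).
Hypothesis wsym : forall k l, w k l = w l k.
Hypothesis wpos : forall k l, k != l -> 0 < w k l.

Definition Lf (x : 'I_N -> R) k := \sum_l (x k - x l) * w k l.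

Lemma sum_ind (x : 'I_N -> R) a : \sum_k x k * (k == a)%:R = x a.
Proof.
rewrite (bigD1 a) //= eqxx mulr1 big1 ?addr0 // => k /negbTE ->; by rewrite mulr0.
Qed.

Lemma sum_ind2 (x : 'I_N -> R) a b :
  \sum_k x k * ((k == a)%:R - (k == b)%:R) = x a - x b.
Proof.
under eq_bigr do rewrite mulrBr. by rewrite sumrB !sum_ind.
Qed.

Lemma Lf_sym x y : \sum_k x k * Lf y k = \sum_k y k * Lf x k.
Proof.
have E : forall x y, \sum_k x k * Lf y k =
   \sum_k \sum_l (x k * y k * w k l) - \sum_k \sum_l (x k * y l * w k l).
  move=> x' y'; rewrite -sumrB; apply: eq_bigr => k _.
  rewrite /Lf mulr_sumr -sumrB; apply: eq_bigr => l _; ring.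
rewrite !E; congr (_ - _).
  by apply: eq_bigr => k _; apply: eq_bigr => l _; rewrite (mulrC (x k)).
rewrite exchange_big /=; apply: eq_bigr => k _; apply: eq_bigr => l _.
by rewrite wsym; ring.
Qed.

Lemma Lf_lin x y k : Lf (fun t => x t - y t) k = Lf x k - Lf y k.
Proof. rewrite /Lf -sumrB; apply: eq_bigr => l _; ring. Qed.

Lemma Lf_sum0 x : \sum_k Lf x k = 0.
Proof.
have -> : \sum_k Lf x k = \sum_k (fun _ => 1) k * Lf x k.
  by apply: eq_bigr => k _; rewrite mul1r.
rewrite Lf_sym big1 // => k _; rewrite /Lf big1 ?mulr0 // => l _; ring.
Qed.

Definition LM : 'M[R]_N :=
  \matrix_(k, l) ((k == l)%:R * (\sum_l' w k l') - w k l).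

Lemma LM_row (u : 'rV[R]_N) l : (u *m LM) 0 l = Lf (fun k => u 0 k) l.
Proof.
rewrite !mxE /Lf.
under eq_bigr do rewrite !mxE mulrBr.
rewrite sumrB.
under eq_bigr do rewrite mulrA (mulrC (u 0 _)) -mulrA mulrC.
rewrite (sum_ind (fun k => u 0 k * \sum_l' w k l')) mulr_sumr -sumrB.
by apply: eq_bigr => k _; rewrite wsym; ring.
Qed.

Lemma Lf_ker (x : 'I_N -> R) a : (forall k, Lf x k = 0) -> forall k, x k = x a.
Proof.
move=> H.
case: (@arg_maxP _ R _ a predT x erefl) => m _ Hm.
have Hz : forall k, (x m - x k) * w m k = 0.
  move=> k; apply: (@psumr_eq0P _ _ predT (fun k => (x m - x k) * w m k)) => //.
    move=> l _; case: (eqVneq m l) => [->|ne]; first by rewrite subrr mul0r.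
    apply: mulr_ge0; first by rewrite subr_ge0; apply: Hm.
    exact: ltW (wpos _ _ ne).
  by apply: H.
have Hk : forall k, x k = x m.
  move=> k; case: (eqVneq m k) => [->//|ne].
  move: (Hz k) => /eqP; rewrite mulf_eq0 (negbTE (lt0r_neq0 (wpos _ _ ne))) orbF.
  by rewrite subr_eq0 => /eqP ->.
by move=> k; rewrite !Hk.
Qed.

Lemma Lf_exists (a b : 'I_N) :
  exists phi, forall k, Lf phi k = (k == a)%:R - (k == b)%:R.
Proof.
pose ones : 'rV[R]_N := const_mx 1.
pose onesC : 'M[R]_(N, 1) := const_mx 1.
pose S := kermx onesC.
have kerM : (kermx LM <= ones)%MS.
  apply/row_subP => i.
  set r := row i (kermx LM).
  have rM : r *m LM = 0 by rewrite /r -row_mul mulmx_ker row0.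
  have Hc : forall k, r 0 k = r 0 a.
    apply: Lf_ker => k; by rewrite -LM_row rM mxE.
  have -> : r = r 0 a *: ones by apply/rowP => k; rewrite Hc [in RHS]mxE [ones _ _]mxE mulr1.
  by apply: scalemx_sub; apply: submx_refl.
have rk1 := mxrankS kerM.
have rko : (\rank ones <= 1)%N by apply: rank_leq_row.
rewrite mxrank_ker in rk1.
have rC : \rank onesC = 1%N.
  apply/eqP; rewrite eqn_leq rank_leq_col lt0n mxrank_eq0.
  apply/eqP => /matrixP /(_ a 0); rewrite !mxE => /eqP; by rewrite oner_eq0.
have rS : \rank S = (N - 1)%N by rewrite /S mxrank_ker rC.
have MS : (LM <= S)%MS.
  rewrite sub_kermx; apply/eqP/matrixP => k z; rewrite !mxE.
  under eq_bigr do rewrite !mxE mulr1.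
  rewrite sumrB.
  under eq_bigr do rewrite mulrC eq_sym.
  by rewrite (sum_ind (fun _ => \sum_l' w k l')) subrr.
pose bv : 'rV[R]_N := \row_k ((k == a)%:R - (k == b)%:R).
have bS : (bv <= S)%MS.
  rewrite sub_kermx; apply/eqP/matrixP => z z'; rewrite !mxE.
  under eq_bigr do rewrite !mxE mulr1.
  rewrite sumrB (bigD1 a) //= eqxx big1 => [|k /negbTE ->//].
  rewrite (bigD1 b) //= eqxx big1 => [|k /negbTE ->//].
  by rewrite !addr0 subrr.
have SM : (S <= LM)%MS.
  have [_ <-] := mxrank_leqif_sup MS.
  have h1 := mxrankS MS.
  apply/eqP; move: rS rk1 rko h1; rewrite /S; lia.
have : (bv <= LM)%MS by apply: submx_trans bS SM.
case/submxP => D HD.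
exists (fun k => D 0 k) => k.
by rewrite -LM_row -HD mxE.
Qed.


Lemma key (Rf : 'I_N -> 'I_N -> R)
  (HR : forall a b, exists phi, (forall k, Lf phi k = (k == a)%:R - (k == b)%:R)
                                /\ Rf a b = phi a - phi b)
  (lam v : 'I_N -> R) (Hl : forall k, Lf lam k = - v k) (i j : 'I_N) :
  \sum_k (Rf j k - Rf i k) * v k = 2 * (lam j - lam i).
Proof.
pose m := i.
have [G HG] := boolp.choice (fun a => Lf_exists a m).
have Gd : forall a b k, Lf (fun t => G a t - G b t) k = (k == a)%:R - (k == b)%:R.
  by move=> a b k; rewrite Lf_lin !HG; ring.
have S1 : forall a b, Rf a b = G a a - G b a - G a b + G b b.
  move=> a b; have [phi [Hp ->]] := HR a b.
  rewrite -sum_ind2.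
  under eq_bigr do rewrite -Gd.
  rewrite Lf_sym.
  under eq_bigr do rewrite Hp.
  rewrite (sum_ind2 (fun t => G a t - G b t)); ring.
have S2 : forall j k, G k j - G k m = G j k - G j m.
  move=> j' k.
  have := Lf_sym (G k) (G j').
  under eq_bigr do rewrite HG.
  under [X in _ = X]eq_bigr do rewrite HG.
  by rewrite !sum_ind2.
have S3 : \sum_k v k = 0.
  have -> : \sum_k v k = - \sum_k Lf lam k.
    by rewrite -sumrN; apply: eq_bigr => k _; rewrite Hl opprK.
  by rewrite Lf_sum0 oppr0.
have S4 : \sum_k (G j k - G i k) * v k = - (lam j - lam i).
  have -> : \sum_k (G j k - G i k) * v k = - \sum_k (G j k - G i k) * Lf lam k.
    by rewrite -sumrN; apply: eq_bigr => k _; rewrite Hl; ring.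
  rewrite (Lf_sym (fun k => G j k - G i k)).
  under eq_bigr do rewrite Gd.
  by rewrite sum_ind2.
have -> : \sum_k (Rf j k - Rf i k) * v k =
   (G j j + G j m - G i i - G i m) * \sum_k v k
   - 2 * \sum_k (G j k - G i k) * v k.
  rewrite mulr_sumr mulr_sumr -sumrB; apply: eq_bigr => k _.
  have e1 := S2 j k. have e2 := S2 i k.
  suff -> : Rf j k - Rf i k = (G j j + G j m - G i i - G i m) - 2 * (G j k - G i k) by ring.
  rewrite !S1; move: e1 e2; rewrite /m; lra.
by rewrite S3 S4; ring.
Qed.

End Lap.
Arguments Lf {R N} w x k.
Arguments Lf_exists {R N w} wsym wpos a b.
Arguments key {R N w} wsym wpos {Rf} HR {lam v} Hl i j.


Lemma upd_sum (R : realFieldType) (N : nat) (Phi : 'I_N -> 'I_N -> R -> R)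
  (p : 'I_N -> 'I_N -> R) (i j : 'I_N) (x : R) : i != j ->
  \sum_k \sum_(l | l != k) Phi k l ((fun k' l' => if (k' == i) && (l' == j) then x else p k' l') k l)
  = \sum_k \sum_(l | l != k) Phi k l (p k l) + (Phi i j x - Phi i j (p i j)).
Proof.
move=> Hij; apply/eqP; rewrite addrC -subr_eq; apply/eqP.
rewrite -sumrB (bigD1 i) //= [X in _ + X]big1 ?addr0; last first.
  move=> k /negbTE Hk; rewrite -sumrB big1 // => l _; rewrite Hk /=; ring.
rewrite -sumrB (bigD1 j) /=; last by rewrite eq_sym.
rewrite !eqxx /= big1 ?addr0 // => l /andP [_ /negbTE ->]; ring.
Qed.

Lemma swap2 (R : realFieldType) (N : nat) (F : 'I_N -> 'I_N -> R) :
  \sum_k \sum_(l | l != k) F l k = \sum_k \sum_(l | l != k) F k l.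
Proof.
under eq_bigr do rewrite big_mkcond.
rewrite exchange_big; apply: eq_bigr => k _; rewrite [RHS]big_mkcond /=.
by apply: eq_bigr => l _; rewrite eq_sym.
Qed.

Theorem proposition1 (R : realType) (N : nat)
  (alpha beta xi : 'I_N -> 'I_N -> R) (F : 'I_N -> 'I_N -> probability R R)
  (lo hi c pmax : R)
  (Halpha : forall i j, i != j -> 0 < alpha i j)
  (Hbeta : forall i j, i != j -> 0 < beta i j)
  (Hxi : forall i j, i != j -> 0 < xi i j)
  (HFsupp : forall i j, i != j -> F i j (`[lo, hi]%classic) = 1%E)
  (HFmean : forall i j, i != j -> (\int[F i j]_x x%:E = 0)%E)
  (Hc : 0 < c) (Hpmax : c < pmax)
  (p : 'I_N -> 'I_N -> R) (lam : 'I_N -> R) (mu : 'I_N -> 'I_N -> R) :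
  let em := fun i j => eps_minus lo (F i j) in
  optimal alpha beta xi em c pmax p ->
  optimal_dual alpha beta xi em c pmax p lam mu ->
  (forall i j, i != j -> mu i j = 0) ->
  forall i j, i != j ->
    p i j = (c * beta i j + alpha i j + em i j) / (2 * beta i j)
            + (4 * xi i j)^-1 *
              \sum_(k < N) (eff_res beta xi j k - eff_res beta xi i k)
                           * vnode alpha beta em c k.

Proof.
move=> em Hopt Hdual Hmu i j Hij.
pose w := fun k l => beta k l / xi k l + beta l k / xi l k.
have wsym : forall k l, w k l = w l k by move=> k l; rewrite /w addrC.
have wpos : forall k l, k != l -> 0 < w k l.
  move=> k l Hkl; have Hlk : l != k by rewrite eq_sym.
  by rewrite /w addr_gt0 // divr_gt0 // ?Hbeta ?Hxi.
have Hpot : forall a b phi, unit_current_potential beta xi a b phi <->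
    (forall k, Lf w phi k = (k == a)%:R - (k == b)%:R).
  move=> a b phi.
  have E : forall k, \sum_(l < N | l != k) (phi k - phi l) / resist beta xi k l = Lf w phi k.
    move=> k; rewrite /Lf [RHS](bigD1 k) //= subrr mul0r add0r.
    by apply: eq_bigr => l _; rewrite /resist div1r invrK.
  by split => H k; [rewrite -E; apply: H | rewrite E; apply: H].
have HR : forall a b, exists phi, (forall k, Lf w phi k = (k == a)%:R - (k == b)%:R)
                                /\ eff_res beta xi a b = phi a - phi b.
  move=> a b; rewrite /eff_res; case: pselect => [h | hn].
    exists (projT1 (cid h)); split => //; apply/Hpot; exact: (projT2 (cid h)).
  exfalso; apply: hn; have [phi Hphi] := Lf_exists wsym wpos a b.
  by exists phi; apply/Hpot.
pose Phi k l x := xi k l * (alpha k l - beta k l * x + em k l) * x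
   - xi k l * (alpha k l - beta k l * x) * c + (lam k - lam l) * (alpha k l - beta k l * x).
have HL : forall q, lagrangian alpha beta xi em c pmax q lam mu =
     \sum_k \sum_(l | l != k) Phi k l (q k l).
  move=> q; rewrite /lagrangian /objective /balance.
  rewrite [X in _ - X]big1 ?subr0; last first.
    move=> k _; apply: big1 => l Hl; rewrite Hmu ?mul0r //; by rewrite eq_sym.
  under [X in _ + X]eq_bigr do rewrite mulrBr !mulr_sumr.
  rewrite sumrB (@swap2 _ _ (fun l k => lam k * (alpha l k - beta l k * q l k))).
  rewrite -!sumrB -big_split /=; apply: eq_bigr => k _.
  rewrite -!sumrB -big_split /=; apply: eq_bigr => l _.
  rewrite /Phi; ring.
have Hloc : forall k l x, k != l -> Phi k l x <= Phi k l (p k l).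
  move=> k l x Hkl.
  have := Hdual.2 (fun k' l' => if (k' == k) && (l' == l) then x else p k' l').
  rewrite !HL upd_sum //; lra.
have Hp : forall k l, k != l -> p k l = (c * beta k l + alpha k l + em k l) / (2 * beta k l)
                                    + (lam l - lam k) / (2 * xi k l).
  move=> k l Hkl.
  have bp : 0 < beta k l by apply: Hbeta.
  have xp : 0 < xi k l by apply: Hxi.
  pose K := xi k l * beta k l.
  have Kp : 0 < K by rewrite mulr_gt0.
  pose D := xi k l * (alpha k l + em k l) - 2 * K * p k l + K * c - (lam k - lam l) * beta k l.
  have HD : forall t, Phi k l (p k l + t) - Phi k l (p k l) = t * D - K * t ^+ 2.
    by move=> t; rewrite /Phi /D /K; ring.
  have := Hloc k l (p k l + D / (2 * K)) Hkl.
  rewrite -subr_le0 HD.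
  have -> : D / (2 * K) * D - K * (D / (2 * K)) ^+ 2 = D ^+ 2 / (4 * K).
    field; by rewrite lt0r_neq0.
  rewrite pmulr_lle0 ?invr_gt0 ?mulr_gt0 // => HD2.
  have D0 : D = 0.
    apply/eqP; rewrite -sqrf_eq0 eq_le HD2 sqr_ge0 //.
  have bn : beta k l != 0 by rewrite lt0r_neq0.
  have xn : xi k l != 0 by rewrite lt0r_neq0.
  apply/eqP; rewrite -subr_eq0; apply/eqP.
  have E : p k l - ((c * beta k l + alpha k l + em k l) / (2 * beta k l)
                                    + (lam l - lam k) / (2 * xi k l)) = D / (- (2 * K)).
    rewrite /D /K; field; by rewrite xn bn.
  by rewrite E D0 mul0r.
have Hlap : forall k, Lf w lam k = - vnode alpha beta em c k.
  move=> k.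
  have Hb := (Hopt.1).1 k.
  apply/eqP; rewrite -addr_eq0; apply/eqP.
  rewrite /Lf (bigD1 k) //= subrr mul0r add0r /vnode -sumrB.
  move: Hb; rewrite /balance -sumrB => Hb.
  rewrite -big_split /=.
  transitivity (2 * \sum_(l < N | l != k)
     (alpha k l - beta k l * p k l - (alpha l k - beta l k * p l k))); last first.
    by rewrite Hb mulr0.
  rewrite mulr_sumr; apply: eq_bigr => l Hl.
  rewrite !Hp //; last by rewrite eq_sym.
  have : 0 < beta k l by apply: Hbeta; rewrite eq_sym.
  have : 0 < beta l k by apply: Hbeta.
  have : 0 < xi k l by apply: Hxi; rewrite eq_sym.
  have : 0 < xi l k by apply: Hxi.
  move=> h1 h2 h3 h4; rewrite /w.
  field; by rewrite !lt0r_neq0.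
have Hk := key wsym wpos HR Hlap i j.
rewrite Hp // Hk.
have h : 0 < xi i j by apply: Hxi.
have h' : 0 < beta i j by apply: Hbeta.
field; by rewrite !lt0r_neq0.
Qed.
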